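(* Let $p\neq\operatorname{char}k_0$ be a prime and $n\geq1$. Let $T\subset\operatorname{PGL}_{p^n}$ be a split maximal torus with root system $\Phi\subset X(T)$ and Weyl group $W$. There exists a surjective homomorphism $\varepsilon:X(T)\to\mathbb{F}_p^n$ such that $\varepsilon(\alpha)\neq0$ for all $\alpha\in\Phi$, $X(T)^{W(\varepsilon)_p}=\{0\}$ for a Sylow $p$-subgroup $W(\varepsilon)_p$ of $W(\varepsilon)$, and $$\operatorname{Rank}(W(\varepsilon),X(T);p)\geq n\,p^n.$$
   Context: $\operatorname{PGL}_{p^n}$ is over a field $k_0$. $W(\varepsilon)=\{w\in W:\varepsilon(w.\chi)=\varepsilon(\chi)\text{ for all }\chi\in X(T)\}$. For a finite group $S$ acting on a finitely generated abelian group $\mathcal{U}$ with Sylow $p$-subgroup $S_p$, $\operatorname{Rank}(S,\mathcal{U};p)$ is the minimal size of an $S_p$-invariant subset of $\mathcal{U}$ generating a subgroup of finite index prime to $p$. *)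

(* Defs.v *)
From HB Require Import structures.
From mathcomp Require Import all_boot all_order all_algebra all_fingroup all_solvable.
From mathcomp Require Import boolp.
Set Implicit Arguments. Unset Strict Implicit. Unset Printing Implicit Defensive.
Import GRing.Theory.
Local Open Scope ring_scope.

(* Concrete model of the split maximal torus T of PGL_N (N = p^n):
   X(T) = characters of the diagonal torus of GL_N trivial on scalars
        = { chi in Z^N | sum_i chi_i = 0 }, elements are row vectors 'rV[int]_N. *)

Definition charX (N : nat) : pred 'rV[int]_N :=
  fun chi => \sum_(i < N) chi 0 i == 0.
Arguments charX : clear implicits.

Definition rootv (N : nat) (i j : 'I_N) : 'rV[int]_N :=
  \row_k (((k == i) : nat)%:Z - ((k == j) : nat)%:Z).

Definition is_root (N : nat) (a : 'rV[int]_N) : Prop :=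
  exists i j : 'I_N, i != j /\ a = rootv i j.

(* Weyl group W = S_N acting on X(T) by permuting coordinates:
   (w.chi)_i = chi_{w^-1 i}. *)
Definition wact (N : nat) (w : {perm 'I_N}) (chi : 'rV[int]_N) : 'rV[int]_N :=
  \row_i chi 0 ((w^-1)%g i).

Definition Weps (N n : nat) (p : nat) (eps : 'rV[int]_N -> 'rV['F_p]_n)
  : {set {perm 'I_N}} :=
  [set w : {perm 'I_N} | `[< forall chi, chi \in charX N -> eps (wact w chi) = eps chi >] ].

Definition in_span (N : nat) (s : seq 'rV[int]_N) (x : 'rV[int]_N) : Prop :=
  exists c : 'I_(size s) -> int, x = \sum_(i < size s) (s`_i) *~ c i.

(* The subgroup L (given as a predicate, contained in X) has index d in X:
   X / L has exactly d elements, i.e. there are d coset representatives in X,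
   pairwise incongruent mod L, such that every x in X is congruent to one. *)
Definition has_index (N : nat) (X : pred 'rV[int]_N) (L : 'rV[int]_N -> Prop)
  (d : nat) : Prop :=
  exists r : 'I_d -> 'rV[int]_N,
    (forall i, r i \in X) /\
    (forall x, x \in X -> exists i, L (x - r i)) /\
    (forall i j, L (r i - r j) -> i = j).

Definition gen_index_prime_to (N p : nat) (X : pred 'rV[int]_N)
  (s : seq 'rV[int]_N) : Prop :=
  exists d : nat, has_index X (in_span s) d /\ coprime d p.

(* Rank(S, X; p) >= m, where P is a Sylow p-subgroup of S:
   every P-invariant finite subset of X generating a subgroup of finite index
   prime to p has at least m elements (Rank is the minimum of these sizes). *)
Definition Rank_ge (N p : nat) (P : {set {perm 'I_N}}) (X : pred 'rV[int]_N)
  (m : nat) : Prop :=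
  forall s : seq 'rV[int]_N,
    uniq s ->
    {subset s <= X} ->
    (forall w x, w \in P -> x \in s -> wact w x \in s) ->
    gen_index_prime_to p X s ->
    (m <= size s)%N.

(* Main.v *)
Require Import Defs.
From HB Require Import structures.
From mathcomp Require Import all_boot all_order all_algebra all_fingroup all_solvable.
From mathcomp Require Import boolp.
Set Implicit Arguments. Unset Strict Implicit. Unset Printing Implicit Defensive.
Import GRing.Theory.
Local Open Scope ring_scope.


Definition epsf (N : nat) (V : zmodType) (f : 'I_N -> V) (chi : 'rV[int]_N) : V :=
  \sum_k f k *~ chi 0 k.

Lemma epsfB N (V : zmodType) (f : 'I_N -> V) : {morph epsf f : x y / x - y}.
Proof.
move=> x y; rewrite /epsf -sumrB; apply: eq_bigr => k _.
by rewrite !mxE mulrzBr.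
Qed.

HB.instance Definition _ N (V : zmodType) (f : 'I_N -> V) :=
  GRing.isZmodMorphism.Build _ _ (epsf f) (@epsfB N V f).

Lemma epsfD N (V : zmodType) (f : 'I_N -> V) x y : epsf f (x + y) = epsf f x + epsf f y.
Proof. exact: raddfD. Qed.
Lemma epsfB' N (V : zmodType) (f : 'I_N -> V) x y : epsf f (x - y) = epsf f x - epsf f y.
Proof. exact: raddfB. Qed.
Lemma epsfMn N (V : zmodType) (f : 'I_N -> V) x m : epsf f (x *+ m) = epsf f x *+ m.
Proof. exact: raddfMn. Qed.
Lemma epsfMz N (V : zmodType) (f : 'I_N -> V) x m : epsf f (x *~ m) = epsf f x *~ m.
Proof. exact: raddfMz. Qed.
Lemma epsf_sum N (V : zmodType) (f : 'I_N -> V) (I : finType) (F : I -> 'rV[int]_N) :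
  epsf f (\sum_i F i) = \sum_i epsf f (F i).
Proof. exact: raddf_sum. Qed.

Lemma epsf_root N (V : zmodType) (f : 'I_N -> V) i j :
  epsf f (rootv i j) = f i - f j.
Proof.
rewrite /epsf (eq_bigr (fun k => f k *~ ((k == i) : nat)%:Z - f k *~ ((k == j) : nat)%:Z)).
  rewrite sumrB; congr (_ - _).
    rewrite (bigD1 i) //= eqxx mulr1z big1 ?addr0 // => k /negbTE ->; by [].
  rewrite (bigD1 j) //= eqxx mulr1z big1 ?addr0 // => k /negbTE ->; by [].
by move=> k _; rewrite !mxE mulrzBr.
Qed.

Lemma charXE N chi : (chi \in charX N) = (epsf (fun _ => 1 : int) chi == 0).
Proof.
rewrite /epsf unfold_in /charX; congr (_ == _); apply: eq_bigr => k _.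
by rewrite intz.
Qed.

Lemma charX_root N (i j : 'I_N) : rootv i j \in charX N.
Proof. by rewrite charXE epsf_root subrr. Qed.

Lemma charXD N x y : x \in charX N -> y \in charX N -> x + y \in charX N.
Proof. by rewrite !charXE epsfD => /eqP hx /eqP hy; rewrite hx hy addr0. Qed.

Lemma charXB N x y : x \in charX N -> y \in charX N -> x - y \in charX N.
Proof. by rewrite !charXE epsfB' => /eqP hx /eqP hy; rewrite hx hy subr0. Qed.

Lemma epsf_const N (V : zmodType) (t : V) chi : chi \in charX N ->
  epsf (fun _ => t) chi = 0.
Proof.
rewrite unfold_in /charX /epsf => /eqP H.
by rewrite -mulrz_sumr H.
Qed.

Lemma epsf_wact N (V : zmodType) (f : 'I_N -> V) w chi :
  epsf f (wact w chi) = epsf (fun k => f (w k)) chi.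
Proof.
rewrite /epsf (reindex_inj (@perm_inj _ w)); apply: eq_bigr => k _.
by rewrite mxE permK.
Qed.

Lemma charX_wact N w chi : chi \in charX N -> wact w chi \in charX N.
Proof. by rewrite !charXE epsf_wact. Qed.

Lemma tauf_inj p n N (phi : 'I_N -> 'rV['F_p]_n) psi (phiK : cancel phi psi)
  (psiK : cancel psi phi) t : injective (fun i => psi (phi i + t)).
Proof.
by move=> i j /(congr1 phi); rewrite !psiK => /addIr /(can_inj phiK).
Qed.

Definition tau p n N (phi : 'I_N -> 'rV['F_p]_n) psi (phiK : cancel phi psi)
  (psiK : cancel psi phi) t : {perm 'I_N} := perm (@tauf_inj p n N phi psi phiK psiK t).

Lemma tauE p n N (phi : 'I_N -> 'rV['F_p]_n) psi (phiK : cancel phi psi)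
  (psiK : cancel psi phi) t i : tau phiK psiK t i = psi (phi i + t).
Proof. by rewrite permE. Qed.

Lemma tauV p n N (phi : 'I_N -> 'rV['F_p]_n) psi (phiK : cancel phi psi)
  (psiK : cancel psi phi) t i : ((tau phiK psiK t)^-1)%g i = psi (phi i - t).
Proof.
apply: (@perm_inj _ (tau phiK psiK t)); rewrite permKV tauE psiK subrK.
by rewrite phiK.
Qed.

Lemma tau_eps p n N (phi : 'I_N -> 'rV['F_p]_n) psi (phiK : cancel phi psi)
  (psiK : cancel psi phi) t chi : chi \in charX N ->
  epsf phi (wact (tau phiK psiK t) chi) = epsf phi chi.
Proof.
move=> hchi; rewrite epsf_wact.
rewrite (_ : epsf _ _ = epsf phi chi + epsf (fun _ => t) chi).
  by rewrite epsf_const ?addr0.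
rewrite /epsf -big_split; apply: eq_bigr => k _.
by rewrite tauE psiK mulrzDl.
Qed.

Lemma tauM p n N (phi : 'I_N -> 'rV['F_p]_n) psi (phiK : cancel phi psi)
  (psiK : cancel psi phi) s t :
  (tau phiK psiK s * tau phiK psiK t)%g = tau phiK psiK (s + t).
Proof. by apply/permP => i; rewrite permM !tauE psiK addrA. Qed.

Lemma tau0 p n N (phi : 'I_N -> 'rV['F_p]_n) psi (phiK : cancel phi psi)
  (psiK : cancel psi phi) : tau phiK psiK 0 = 1%g.
Proof. by apply/permP => i; rewrite tauE perm1 addr0 phiK. Qed.

Lemma tau_inj p n N (phi : 'I_N -> 'rV['F_p]_n) psi (phiK : cancel phi psi)
  (psiK : cancel psi phi) : injective (tau phiK psiK).
Proof.
move=> s t E; have := congr1 (fun w : {perm 'I_N} => w (psi 0)) E.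
rewrite /= !tauE psiK !add0r.
by move/(congr1 phi); rewrite !psiK.
Qed.

Definition Tset p n N (phi : 'I_N -> 'rV['F_p]_n) psi (phiK : cancel phi psi)
  (psiK : cancel psi phi) := [set tau phiK psiK t | t : 'rV['F_p]_n].

Lemma Tset_group p n N (phi : 'I_N -> 'rV['F_p]_n) psi (phiK : cancel phi psi)
  (psiK : cancel psi phi) : group_set (Tset phiK psiK).
Proof.
apply/group_setP; split; first by apply/imsetP; exists 0 => //; rewrite tau0.
move=> x y /imsetP[s _ ->] /imsetP[t _ ->]; rewrite tauM.
by apply/imsetP; exists (s + t).
Qed.

Lemma Weps_T p n N (phi : 'I_N -> 'rV['F_p]_n) psi (phiK : cancel phi psi)
  (psiK : cancel psi phi) : Weps (epsf phi) = Tset phiK psiK.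
Proof.
apply/setP => w; rewrite inE; apply/asboolP/imsetP.
  move=> H; exists (phi (w (psi 0)) - phi (psi 0)) => //.
  apply/permP => i; rewrite tauE.
  have := H _ (charX_root i (psi 0)).
  rewrite epsf_wact !epsf_root => /eqP; rewrite subr_eq => /eqP E.
  by rewrite (addrC (phi (w _))) addrA -E phiK.
by case=> t _ -> chi hchi; rewrite tau_eps.
Qed.

Lemma card_Tset p n N (phi : 'I_N -> 'rV['F_p]_n) psi (phiK : cancel phi psi)
  (psiK : cancel psi phi) : #|Tset phiK psiK| = #|{: 'rV['F_p]_n}|.
Proof. by rewrite card_imset //; apply: tau_inj. Qed.


Lemma natrFp p (hp : prime p) (b : 'F_p) : (b : nat)%:R = b.
Proof. by rewrite natr_Zp. Qed.

Lemma rV_Fp_p p n (hp : prime p) (x : 'rV['F_p]_n) : x *+ p = 0.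
Proof. by rewrite -scaler_nat (pcharf0 (pchar_Fp hp)) scale0r. Qed.

Lemma inner_eq p n (M : zmodType) (F : 'rV['F_p]_n -> M) (t : 'rV['F_p]_n)
  (k : 'rV['F_p]_n -> 'F_p) (hk : forall v b, k (v + b *: t) = k v + b)
  (hF : forall v b, F (v + b *: t) = F v) b :
  \sum_(v | k v == b) F v = \sum_(v | k v == 0) F v.
Proof.
rewrite (reindex (fun v => v + b *: t)); last first.
  by exists (fun v => v - b *: t) => v _; rewrite ?addrK ?subrK.
apply: eq_big => v; last by move=> _; rewrite hF.
by rewrite hk -{2}(add0r b) (inj_eq (addIr b)).
Qed.

Lemma total_eq p n (hp : prime p) (M : zmodType) (F : 'rV['F_p]_n -> M) (t : 'rV['F_p]_n)
  (k : 'rV['F_p]_n -> 'F_p) (hk : forall v b, k (v + b *: t) = k v + b)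
  (hF : forall v b, F (v + b *: t) = F v) :
  \sum_v F v = (\sum_(v | k v == 0) F v) *+ p.
Proof.
rewrite (partition_big k xpredT) //=.
rewrite (eq_bigr (fun _ => \sum_(v | k v == 0) F v)); last first.
  by move=> b _; apply: inner_eq.
by rewrite sumr_const card_Fp.
Qed.

Lemma periodic_eps0 p n N (hp : prime p) (phi : 'I_N -> 'rV['F_p]_n) psi
  (phiK : cancel phi psi) (psiK : cancel psi phi) chi t :
  chi \in charX N -> t != 0 -> (forall v, chi 0 (psi (v + t)) = chi 0 (psi v)) ->
  epsf phi chi = 0.
Proof.
move=> hX tn0 hper.
pose c v := chi 0 (psi v).
have cper : forall v b, c (v + b *: t) = c v.
  move=> v b; rewrite -(natrFp hp b) scaler_nat.
  elim: (b : nat) => [|m IH]; first by rewrite mulr0n addr0.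
  by rewrite mulrSr addrA /c hper.
have [j tj] : exists j, t 0 j != 0.
  case: (pickP (fun j => t 0 j != 0)) => [j tj|H]; first by exists j.
  by case/eqP: tn0; apply/rowP => j; have := H j; rewrite mxE => /negbFE/eqP.
pose k (v : 'rV['F_p]_n) := v 0 j / t 0 j.
have hk v b : k (v + b *: t) = k v + b.
  by rewrite /k !mxE mulrDl mulfK.
have E1 : epsf phi chi = \sum_v v *~ c v.
  rewrite /epsf (reindex psi) /=; last exact: onW_bij (Bijective psiK phiK).
  by apply: eq_bigr => v _; rewrite psiK.
have Csum : \sum_v c v = 0.
  move: hX; rewrite unfold_in /charX => /eqP H; rewrite -[RHS]H.
  rewrite [RHS](reindex psi) /=; last exact: onW_bij (Bijective psiK phiK).
  by [].
have C0 : \sum_(v | k v == 0) c v = 0.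
  move: Csum; rewrite (total_eq hp hk cper) => /eqP.
  rewrite Num.Theory.mulrn_eq0 => /orP[/eqP p0|/eqP //]; by move: (prime_gt0 hp); rewrite [in X in X -> _]p0.
rewrite E1 (eq_bigr (fun v => (v - k v *: t) *~ c v + (k v *: t) *~ c v)); last first.
  by move=> v _; rewrite -mulrzDl subrK.
rewrite big_split /=.
rewrite (total_eq hp (F := fun v => (v - k v *: t) *~ c v) hk); last first.
  move=> v b; rewrite hk cper scalerDl; congr (_ *~ _).
  by rewrite opprD addrACA subrr addr0.
rewrite rV_Fp_p // add0r.
rewrite (partition_big k xpredT) //=.
apply: big1 => b _.
rewrite (eq_bigr (fun v => (b *: t) *~ c v)); last by move=> v /eqP ->.
rewrite -mulrz_sumr.
by rewrite (inner_eq hk cper) C0.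
Qed.


Lemma in_span0 N (s : seq 'rV[int]_N) : in_span s 0.
Proof. by exists (fun _ => 0); rewrite big1 // => i _; rewrite mulr0z. Qed.

Lemma in_spanD N (s : seq 'rV[int]_N) x y :
  in_span s x -> in_span s y -> in_span s (x + y).
Proof.
move=> [c1 ->] [c2 ->]; exists (fun i => c1 i + c2 i).
by rewrite -big_split; apply: eq_bigr => i _; rewrite mulrzDr.
Qed.

Lemma in_spanN N (s : seq 'rV[int]_N) x : in_span s x -> in_span s (- x).
Proof.
move=> [c ->]; exists (fun i => - c i).
by rewrite -sumrN; apply: eq_bigr => i _; rewrite mulrNz.
Qed.

Lemma in_spanB N (s : seq 'rV[int]_N) x y :
  in_span s x -> in_span s y -> in_span s (x - y).
Proof. by move=> hx hy; apply: in_spanD => //; apply: in_spanN. Qed.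

Lemma in_span_sum N (s : seq 'rV[int]_N) (I : finType) (F : I -> 'rV[int]_N) :
  (forall i, in_span s (F i)) -> in_span s (\sum_i F i).
Proof.
move=> hF; apply: (big_ind (in_span s)); [exact: in_span0 | exact: in_spanD|].
by move=> i _; apply: hF.
Qed.

Lemma index_mult N (s : seq 'rV[int]_N) d :
  has_index (charX N) (in_span s) d ->
  forall x, x \in charX N -> in_span s (x *+ d).
Proof.
case=> r [rX [rcov rinj]] x hx.
have : forall i, exists j, in_span s (x + r i - r j).
  by move=> i; apply: rcov; apply: charXD.
case/fin_all_exists => sg Hsg.
have sg_inj : injective sg.
  move=> i i' E; apply: rinj; have := in_spanB (Hsg i) (Hsg i'); rewrite E.
  by rewrite opprB subrKA opprD addrACA subrr add0r.
have := in_span_sum (fun i => Hsg i).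
rewrite sumrB big_split /= [\sum_(i < d) r i](reindex_inj sg_inj) /= addrK.
by rewrite sumr_const card_ord.
Qed.


Lemma dim_rV p n : \dim (fullv : {vspace 'rV['F_p]_n}) = n.
Proof. rewrite dimvf dim_matrix; exact: mul1n. Qed.

Lemma epsf_surj p n N (phi : 'I_N -> 'rV['F_p]_n) psi
  (phiK : cancel phi psi) (psiK : cancel psi phi) y :
  exists2 x, x \in charX N & epsf phi x = y.
Proof.
exists (rootv (psi y) (psi 0)); first exact: charX_root.
by rewrite epsf_root !psiK subr0.
Qed.

Lemma wact_tauE p n N (phi : 'I_N -> 'rV['F_p]_n) psi
  (phiK : cancel phi psi) (psiK : cancel psi phi) t x v :
  wact (tau phiK psiK t) x 0 (psi v) = x 0 (psi (v - t)).
Proof. by rewrite mxE tauV psiK. Qed.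

Lemma rank_bound p n N (hp : prime p) (phi : 'I_N -> 'rV['F_p]_n) psi
  (phiK : cancel phi psi) (psiK : cancel psi phi) (P : {set {perm 'I_N}}) :
  (forall t, tau phiK psiK t \in P) ->
  Rank_ge p P (charX N) (n * #|{: 'rV['F_p]_n}|).
Proof.
move=> tauP s us sX sinv [d [hidx cop]].
pose eps := epsf phi.
pose E : {set 'rV['F_p]_n} := [set e | (e != 0) && (e \in map eps s)].
have nE : (n <= #|E|)%N.
  have spanE : forall y, y \in <<enum E>>%VS.
    move=> y.
    have dunit : (d%:R : 'F_p) != 0.
      rewrite -(dvdn_pcharf (pchar_Fp hp)) -prime_coprime // coprime_sym.
      exact: cop.
    have [x xX ex] := epsf_surj phiK psiK ((d%:R)^-1 *: y).
    have [cf hcf] := index_mult hidx xX.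
    have : eps (x *+ d) = y.
      by rewrite /eps epsfMn ex scalerMnl -mulr_natr mulVf // scale1r.
    rewrite hcf /eps epsf_sum => <-.
    apply: rpred_sum => i _; rewrite epsfMz; apply: rpredMz.
    have si : s`_i \in s by apply: mem_nth.
    case: (eqVneq (epsf phi s`_i) 0) => [->|nz]; first exact: mem0v.
    apply: memv_span; rewrite mem_enum inE nz /=.
    exact: (map_f eps si).
  apply: (@leq_trans (\dim (fullv : {vspace 'rV['F_p]_n}))); first by rewrite dim_rV.
  rewrite cardE; apply: leq_trans (dim_span _); apply: dimvS.
  by apply/subvP => y _; apply: spanE.
pose rep e := nth 0 s (find (fun x => eps x == e) s).
have repP e : e \in E -> rep e \in s /\ eps (rep e) = e.
  rewrite inE => /andP[_ /mapP[x xs ->]].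
  have hs : has (fun z => eps z == eps x) s by apply/hasP; exists x.
  split; first by rewrite /rep mem_nth // -has_find.
  by apply/eqP; apply: (nth_find 0 hs).
pose f (et : 'rV['F_p]_n * 'rV['F_p]_n) := wact (tau phiK psiK et.2) (rep et.1).
have finj : {in enum (setX E [set: 'rV['F_p]_n]) &, injective f}.
  move=> [e1 t1] [e2 t2]; rewrite !mem_enum !in_setX !in_setT /= !andbT => he1 he2.
  have [r1s r1e] := repP e1 he1; have [r2s r2e] := repP e2 he2.
  rewrite /f /= => Ef.
  have ee : e1 = e2.
    have := congr1 eps Ef; rewrite /eps !tau_eps ?sX //.
    by rewrite -/eps r1e r2e.
  subst e2; congr (_, _).
  case: (eqVneq (t1 - t2) 0) => [ht|tn0].
    by apply/eqP; rewrite -subr_eq0 ht.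
  exfalso.
  have : eps (rep e1) = 0.
    apply: (periodic_eps0 hp phiK psiK (sX _ r1s) tn0) => v.
    have := congr1 (fun m : 'rV[int]_N => m 0 (psi (v + t1))) Ef.
    rewrite /= !wact_tauE addrK => ->.
    by rewrite addrA.
  by rewrite r1e => e0; move: he1; rewrite inE e0 eqxx.
have U := @uniq_leq_size _ (map f (enum (setX E [set: 'rV['F_p]_n]))) s.
rewrite map_inj_in_uniq // enum_uniq size_map -cardE cardsX cardsT in U.
apply: leq_trans (U isT _); first by rewrite leq_mul2r nE orbT.
move=> y /mapP[[e t]]; rewrite mem_enum in_setX in_setT /= andbT => he ->.
by apply: sinv; [exact: tauP | have [] := repP e he].
Qed.


Lemma cardV p n (hp : prime p) : #|{: 'rV['F_p]_n}| = (p ^ n)%N.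
Proof. by rewrite card_mx card_Fp // mul1n. Qed.

Lemma bij p n (hp : prime p) : exists (phi : 'I_(p ^ n) -> 'rV['F_p]_n) psi, cancel phi psi /\ cancel psi phi.
Proof.
pose e := cardV n hp.
exists (fun i => enum_val (cast_ord (esym e) i)), (fun v => cast_ord e (enum_rank v)).
split => [i|v]; first by rewrite enum_valK cast_ordKV.
by rewrite cast_ordK enum_rankK.
Qed.

Theorem proposition14p1 (k0 : fieldType) (p n : nat)
  (hp : prime p) (hchar : p \notin [pchar k0]) (hn : (1 <= n)%N) :
  exists eps : 'rV[int]_(p ^ n) -> 'rV['F_p]_n,
    (forall x y, x \in charX (p ^ n) -> y \in charX (p ^ n) ->
        eps (x + y) = eps x + eps y) /\
    (forall y : 'rV['F_p]_n, exists2 x, x \in charX (p ^ n) & eps x = y) /\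
    (forall a, is_root a -> eps a != 0) /\
    (exists P : {group {perm 'I_(p ^ n)}},
        (p.-Sylow(Weps eps) P)%g /\
        (forall chi, chi \in charX (p ^ n) ->
           (forall w, w \in P -> wact w chi = chi) -> chi = 0)) /\
    (forall P : {group {perm 'I_(p ^ n)}},
        (p.-Sylow(Weps eps) P)%g -> Rank_ge p P (charX (p ^ n)) (n * p ^ n)).
Proof.
have [phi [psi [phiK psiK]]] := bij n hp.
exists (epsf phi).
have gT := Tset_group phiK psiK.
pose G := Group gT.
have WG : Weps (epsf phi) = G by rewrite (Weps_T phiK psiK).
have pG : (p.-group G)%g.
  by rewrite /pgroup /= card_Tset cardV // pnatX pnat_id.
have SG : (p.-Sylow(Weps (epsf phi)) G)%g.
  by rewrite WG pHallE subxx /= part_pnat_id.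
split; first by move=> x y _ _; apply: epsfD.
split; first by move=> y; apply: epsf_surj.
split.
  move=> a [i [j [ij ->]]]; rewrite epsf_root subr_eq0.
  by rewrite (inj_eq (can_inj phiK)).
split.
  exists G; split => // chi hchi hfix.
  have cst v : chi 0 (psi v) = chi 0 (psi 0).
    have tG : tau phiK psiK v \in G by apply/imsetP; exists v.
    have := hfix _ tG.
    move/(congr1 (fun m : 'rV[int]_(p ^ n) => m 0 (psi v))).
    by rewrite /= wact_tauE subrr => ->.
  have c0 : chi 0 (psi 0) = 0.
    move: hchi; rewrite unfold_in /charX.
    rewrite (reindex psi) /=; last exact: onW_bij (Bijective psiK phiK).
    rewrite (eq_bigr (fun _ => chi 0 (psi 0))); last by move=> v _; rewrite cst.
    rewrite sumr_const Num.Theory.mulrn_eq0 => /orP[|/eqP //].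
    by rewrite cardV // expn_eq0 (gtn_eqF (prime_gt0 hp)).
  by apply/rowP => i; rewrite -(phiK i) cst c0 mxE.
move=> P SP.
have RB := @rank_bound p n (p ^ n) hp phi psi phiK psiK P.
rewrite cardV // in RB; apply: RB => t.
have PG : P :=: G.
  by apply: (pHall_id _ pG); rewrite -WG.
by rewrite PG; apply/imsetP; exists t.
Qed.
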